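(* Let $\mathbf{F}$ be a three-dimensional Euclidean space with inner product $\langle\cdot,\cdot\rangle$, let $Z\in\mathbf{F}$ be a unit vector and $R>0$. Let $B$ be the sphere of radius $R$ centered at the origin, and $\mathbf{E}=\{q\in\mathbf{F}:\langle Z,q\rangle=R\}$ the plane tangent to $B$ at $O=RZ$. For $q\in B$ put $h=\langle Z,q\rangle/R$, $Z_B=Z-\frac{h}{R}q$, and $b(q)=R^{-2}(1-h^2)^{-3/2}$. Consider a particle of unit mass moving on $B$, in the open hemisphere $\{h>0\}$ minus the point $O$, according to the spherical Kepler problem, i.e. $\ddot q=b(q)\,Z_B+\lambda q$ with $\lambda$ the scalar (depending on $q,\dot q$, possibly $t$) that keeps $q$ on $B$. Its energy is $$\mathcal{E}=\tfrac12\|\dot q\|^2+U(q),\qquad U(q)=-\frac{h}{R\sqrt{1-h^2}}.$$ Let $q_{\mathbf{E}}=q/h\in\mathbf{E}$ be the central projection, $Q=q_{\mathbf{E}}-RZ$, and $\tau$ the time defined by $d\tau=h^{-2}\,dt$. Then $Q$ satisfies $\frac{d^2Q}{d\tau^2}=-\|Q\|^{-3}Q$; suppose that its orbit is an ellipse with semi-major axis $a$ and eccentricity $e$. Then $$\mathcal{E}=-\frac{1}{2a}+\frac{a(1-e^2)}{2R^2}.$$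
   Context: Dots denote derivatives with respect to the original time $t$. The Kepler problem in the plane $\mathbf{E}$ (with attracting center $O$ and unit masses) has energy $E=\frac12\|dQ/d\tau\|^2-\frac1{\|Q\|}$; for an elliptic orbit with semi-major axis $a$ and eccentricity $e$ one has $E=-\frac1{2a}$ and squared angular momentum $\|Q\times dQ/d\tau\|^2=a(1-e^2)$. *)

(* Defs.v *)
(* The 3-dimensional Euclidean space F is modelled as 'rV[R]_3 with the
   standard inner product (every 3-d Euclidean space is isometric to it). *)
From HB Require Import structures.
From mathcomp Require Import all_boot all_order all_algebra.
From mathcomp Require Import all_classical all_reals all_analysis.
Set Implicit Arguments. Unset Strict Implicit. Unset Printing Implicit Defensive.
Import Order.TTheory GRing.Theory Num.Theory.
Import numFieldNormedType.Exports.
Local Open Scope classical_set_scope.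
Local Open Scope ring_scope.

Section Kepler.
Variable R : realType.

Definition dot (u v : 'rV[R]_3) : R := \sum_(i < 3) u 0 i * v 0 i.
Definition enorm (u : 'rV[R]_3) : R := Num.sqrt (dot u u).

Definition hgt (Rad : R) (Z q : 'rV[R]_3) : R := dot Z q / Rad.
Definition ZB (Rad : R) (Z q : 'rV[R]_3) : 'rV[R]_3 :=
  Z - (hgt Rad Z q / Rad) *: q.
Definition bfun (Rad : R) (Z q : 'rV[R]_3) : R :=
  (Rad ^+ 2 * Num.sqrt (1 - hgt Rad Z q ^+ 2) ^+ 3)^-1.
Definition Upot (Rad : R) (Z q : 'rV[R]_3) : R :=
  - (hgt Rad Z q / (Rad * Num.sqrt (1 - hgt Rad Z q ^+ 2))).
Definition energy (Rad : R) (Z q qdot : 'rV[R]_3) : R :=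
  2^-1 * dot qdot qdot + Upot Rad Z q.
Definition Qproj (Rad : R) (Z q : 'rV[R]_3) : 'rV[R]_3 :=
  (hgt Rad Z q)^-1 *: q - Rad *: Z.

(* An ellipse with semi-major axis a and eccentricity e (0 <= e < 1), lying
   in the plane through the origin orthogonal to Z (the plane E translated
   by -RZ, where Q lives): foci F1, F2 in that plane at distance 2ae. *)
Definition is_ellipse_in_plane (Z : 'rV[R]_3) (S : set 'rV[R]_3) (a e : R) :=
  0 < a /\ 0 <= e < 1 /\
  exists F1 F2 : 'rV[R]_3,
    dot Z F1 = 0 /\ dot Z F2 = 0 /\ enorm (F1 - F2) = 2 * a * e /\
    S = [set x | dot Z x = 0 /\ enorm (x - F1) + enorm (x - F2) = 2 * a].
End Kepler.

(* Main.v *)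
Require Import Defs.
From HB Require Import structures.
From mathcomp Require Import all_boot all_order all_algebra.
From mathcomp Require Import all_classical all_reals all_analysis.
From mathcomp Require Import ring lra.
Import Order.TTheory GRing.Theory Num.Theory.
Import numFieldNormedType.Exports.
Local Open Scope classical_set_scope.
Local Open Scope ring_scope.
Set Implicit Arguments. Unset Strict Implicit.

Section Vec.
Context {R : realType}.
Definition i0 : 'I_3 := @Ordinal 3 0 isT.
Definition i1 : 'I_3 := @Ordinal 3 1 isT.
Definition i2 : 'I_3 := @Ordinal 3 2 isT.

Lemma dotE (u v : 'rV[R]_3) : dot u v = u 0 i0 * v 0 i0 + u 0 i1 * v 0 i1 + u 0 i2 * v 0 i2.
Proof.
rewrite /dot !big_ord_recr big_ord0 /= add0r.
have -> : widen_ord (leqnSn 2) (widen_ord (leqnSn 1) ord_max) = i0 :> 'I_3 by apply: val_inj.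
have -> : widen_ord (leqnSn 2) ord_max = i1 :> 'I_3 by apply: val_inj.
have -> : ord_max = i2 :> 'I_3 by apply: val_inj.
by [].
Qed.

Lemma ord3P (P : 'I_3 -> Prop) : P i0 -> P i1 -> P i2 -> forall i, P i.
Proof.
move=> H0 H1 H2 [[|[|[|k]]] Hk].
- by rewrite (bool_irrelevance Hk (isT : 0 < 3)%N).
- by rewrite (bool_irrelevance Hk (isT : 1 < 3)%N).
- by rewrite (bool_irrelevance Hk (isT : 2 < 3)%N).
- by [].
Qed.

Lemma rv3P (u v : 'rV[R]_3) : u 0 i0 = v 0 i0 -> u 0 i1 = v 0 i1 -> u 0 i2 = v 0 i2 -> u = v.
Proof.
move=> H0 H1 H2; apply/rowP; exact: ord3P.
Qed.

Implicit Types u v w : 'rV[R]_3.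
Lemma dotC u v : dot u v = dot v u.
Proof. rewrite !dotE; ring. Qed.
Lemma dotDr u v w : dot u (v + w) = dot u v + dot u w.
Proof. rewrite !dotE !mxE; ring. Qed.
Lemma dotDl u v w : dot (v + w) u = dot v u + dot w u.
Proof. rewrite !dotE !mxE; ring. Qed.
Lemma dotBr u v w : dot u (v - w) = dot u v - dot u w.
Proof. rewrite !dotE !mxE; ring. Qed.
Lemma dotBl u v w : dot (v - w) u = dot v u - dot w u.
Proof. rewrite !dotE !mxE; ring. Qed.
Lemma dotZr u v (k : R) : dot u (k *: v) = k * dot u v.
Proof. rewrite !dotE !mxE; ring. Qed.
Lemma dotZl u v (k : R) : dot (k *: v) u = k * dot v u.
Proof. rewrite !dotE !mxE; ring. Qed.
Lemma dotNr u v : dot u (- v) = - dot u v.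
Proof. rewrite !dotE !mxE; ring. Qed.
Lemma dotNl u v : dot (- v) u = - dot v u.
Proof. rewrite !dotE !mxE; ring. Qed.
Lemma dot0r u : dot u 0 = 0.
Proof. rewrite !dotE !mxE; ring. Qed.
Lemma dot0l u : dot 0 u = 0.
Proof. rewrite !dotE !mxE; ring. Qed.
Lemma dot_ge0 u : 0 <= dot u u.
Proof. rewrite dotE; nra. Qed.
Lemma dot_eq0 u : dot u u = 0 -> u = 0.
Proof.
rewrite dotE => H; apply: rv3P; rewrite mxE; nra.
Qed.
Lemma enorm_sq u : enorm u ^+ 2 = dot u u.
Proof. by rewrite /enorm sqr_sqrtr // dot_ge0. Qed.
Lemma enorm_ge0 u : 0 <= enorm u.
Proof. exact: sqrtr_ge0. Qed.

Lemma dot_lin2 (a c : R) u v : dot (a *: u - c *: v) (a *: u - c *: v)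
  = a ^+ 2 * dot u u - 2 * a * c * dot u v + c ^+ 2 * dot v v.
Proof. rewrite !dotE !mxE; ring. Qed.
Lemma dot_linl (a c : R) u v w : dot (a *: u - c *: v) w = a * dot u w - c * dot v w.
Proof. rewrite !dotE !mxE; ring. Qed.

Lemma dot_lin3 (al be : R) c u w : dot (c + al *: u + be *: w) (c + al *: u + be *: w)
  = dot c c + 2 * al * dot c u + 2 * be * dot c w + al ^+ 2 * dot u u
    + 2 * al * be * dot u w + be ^+ 2 * dot w w.
Proof. rewrite !dotE !mxE; ring. Qed.
Lemma dot_lin3r (al be : R) y c u w : dot y (c + al *: u + be *: w)
  = dot y c + al * dot y u + be * dot y w.
Proof. rewrite !dotE !mxE; ring. Qed.
Lemma dot_lin2' (al be : R) u w : dot (al *: u + be *: w) (al *: u + be *: w)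
  = al ^+ 2 * dot u u + 2 * al * be * dot u w + be ^+ 2 * dot w w.
Proof. rewrite !dotE !mxE; ring. Qed.

Definition cross u v : 'rV[R]_3 := \row_(j < 3)
  (if j == i0 then u 0 i1 * v 0 i2 - u 0 i2 * v 0 i1
   else if j == i1 then u 0 i2 * v 0 i0 - u 0 i0 * v 0 i2
   else u 0 i0 * v 0 i1 - u 0 i1 * v 0 i0).

Lemma crossE u v : [/\ cross u v 0 i0 = u 0 i1 * v 0 i2 - u 0 i2 * v 0 i1,
   cross u v 0 i1 = u 0 i2 * v 0 i0 - u 0 i0 * v 0 i2 &
   cross u v 0 i2 = u 0 i0 * v 0 i1 - u 0 i1 * v 0 i0].
Proof. by rewrite !mxE. Qed.

Lemma dot_cross_l u v : dot u (cross u v) = 0.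
Proof. case: (crossE u v) => A B C; rewrite dotE A B C; ring. Qed.
Lemma dot_cross_r u v : dot v (cross u v) = 0.
Proof. case: (crossE u v) => A B C; rewrite dotE A B C; ring. Qed.
Lemma dot_cross_cross u v : dot (cross u v) (cross u v) = dot u u * dot v v - dot u v ^+ 2.
Proof. case: (crossE u v) => A B C; rewrite !dotE A B C; ring. Qed.
Lemma gram_cross u v y z : dot (cross u v) y * dot (cross u v) z =
  dot u u * (dot v v * dot y z - dot v z * dot y v)
  - dot u v * (dot v u * dot y z - dot v z * dot y u)
  + dot u z * (dot v u * dot y v - dot v v * dot y u).
Proof. case: (crossE u v) => A B C; rewrite !dotE A B C; ring. Qed.
End Vec.

Section Der.
Context {R : realType}.

Lemma der_uniq (f : R -> R) (t d1 d2 : R) : is_derive t 1 f d1 -> is_derive t 1 f d2 -> d1 = d2.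
Proof. by move=> H1 H2; rewrite -(@derive_val _ _ _ _ _ _ _ H1) -(@derive_val _ _ _ _ _ _ _ H2). Qed.

Lemma DK (c t : R) : is_derive t 1 (fun _ : R => c) 0.
Proof. exact: is_derive_cst. Qed.
Lemma DI (t : R) : is_derive t 1 (fun x : R => x) 1.
Proof. exact: is_derive_id. Qed.
Lemma DA (f g : R -> R) (t df dg : R) : is_derive t 1 f df -> is_derive t 1 g dg ->
  is_derive t 1 (fun x => f x + g x) (df + dg).
Proof. move=> H1 H2; exact: (is_deriveD H1 H2). Qed.
Lemma DB (f g : R -> R) (t df dg : R) : is_derive t 1 f df -> is_derive t 1 g dg ->
  is_derive t 1 (fun x => f x - g x) (df - dg).
Proof. move=> H1 H2; exact: (is_deriveB H1 H2). Qed.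
Lemma DN (f : R -> R) (t df : R) : is_derive t 1 f df ->
  is_derive t 1 (fun x => - f x) (- df).
Proof. move=> H1; exact: (is_deriveN H1). Qed.
Lemma DM (f g : R -> R) (t df dg : R) : is_derive t 1 f df -> is_derive t 1 g dg ->
  is_derive t 1 (fun x => f x * g x) (f t * dg + g t * df).
Proof. move=> H1 H2; exact: (is_deriveM H1 H2). Qed.
Lemma DV (f : R -> R) (t df : R) : f t != 0 -> is_derive t 1 f df ->
  is_derive t 1 (fun x => (f x)^-1) (- df / (f t) ^+ 2).
Proof.
move=> H0 H1; have H := is_deriveV H0 H1.
apply: is_derive_eq H _; rewrite -[_ *: _]/(_ * _).
by rewrite mulrC mulrN mulNr.
Qed.
Lemma DS (f : R -> R) (t df : R) : 0 < f t -> is_derive t 1 f df ->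
  is_derive t 1 (fun x => Num.sqrt (f x)) (df / (2 * Num.sqrt (f t))).
Proof.
move=> H0 H1.
have := @is_derive1_comp _ Num.sqrt f t _ _ (is_derive1_sqrt H0) H1.
by rewrite mulrC.
Qed.

Lemma Dcomp_rv (f : R -> 'rV[R]_3) (t : R) df j : is_derive t 1 f df ->
  is_derive t 1 (fun x => f x 0 j) (df 0 j).
Proof.
move=> [Hd Hv]; have Hd' := Hd; move/derivable_mxP: Hd' => Hdj.
apply: DeriveDef; first exact: Hdj.
by rewrite -Hv derive_mx // mxE.
Qed.

Lemma Drv (f : R -> 'rV[R]_3) (t : R) (d : 'rV[R]_3) :
  (forall j, is_derive t 1 (fun x => f x 0 j) (d 0 j)) -> is_derive t 1 f d.
Proof.
move=> H.
have Hd : derivable f t 1.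
  apply/derivable_mxP => i j; rewrite (ord1 i); by case: (H j).
apply: DeriveDef => //; rewrite derive_mx //; apply/rowP => j; rewrite !mxE.
exact: derive_val.
Qed.

Lemma Ddot (f g : R -> 'rV[R]_3) (t : R) df dg : is_derive t 1 f df -> is_derive t 1 g dg ->
  is_derive t 1 (fun x => dot (f x) (g x)) (dot (f t) dg + dot df (g t)).
Proof.
move=> Hf Hg.
have E : (fun x => dot (f x) (g x)) = fun x => (f x 0 i0 * g x 0 i0 + f x 0 i1 * g x 0 i1) + f x 0 i2 * g x 0 i2.
  by apply/funext => x; rewrite dotE.
rewrite E; apply: is_derive_eq.
  apply: DA; first apply: DA; apply: DM; exact: Dcomp_rv.
rewrite !dotE; ring.
Qed.
End Der.

Section Der2.
Context {R : realType}.
Lemma DX2 (f : R -> R) (t df : R) : is_derive t 1 f df ->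
  is_derive t 1 (fun x => f x ^+ 2) (2 * f t * df).
Proof.
move=> H; have -> : (fun x => f x ^+ 2) = fun x => f x * f x by apply/funext => x; rewrite expr2.
apply: (is_derive_eq (DM H H)).
ring.
Qed.
End Der2.


Lemma alg (R : realType) (a b e2 cc cu cw L au aw : R) :
  0 < a -> 0 < b -> b ^+ 2 = a ^+ 2 * (1 - e2) -> 0 <= e2 -> e2 < 1 ->
  cc = cu ^+ 2 + cw ^+ 2 ->
  (forall al be, be ^+ 2 = (1 - e2) * (a ^+ 2 - al ^+ 2) -> -a <= al <= a ->
     0 <= L - al * au - be * aw /\
     cc + 2 * al * cu + 2 * be * cw + al ^+ 2 + be ^+ 2 = (L - al * au - be * aw) ^+ 2) ->
  [/\ au ^+ 2 + aw ^+ 2 = e2, L = a, cu = - L * au & cw = - L * aw].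
Proof.
move=> Ha Hb Hb2 He0 He1 Hcc Hp.
have h1 : (0 : R) ^+ 2 = (1 - e2) * (a ^+ 2 - a ^+ 2) by rewrite subrr mulr0 expr0n.
have h2 : (0 : R) ^+ 2 = (1 - e2) * (a ^+ 2 - (- a) ^+ 2) by rewrite sqrrN subrr mulr0 expr0n.
have h3 : b ^+ 2 = (1 - e2) * (a ^+ 2 - 0 ^+ 2) by rewrite Hb2 expr0n subr0 mulrC.
have h4 : (- b) ^+ 2 = (1 - e2) * (a ^+ 2 - 0 ^+ 2) by rewrite sqrrN Hb2 expr0n subr0 mulrC.
have h5 : (4 / 5 * b) ^+ 2 = (1 - e2) * (a ^+ 2 - (3 / 5 * a) ^+ 2).
  by rewrite exprMn Hb2; field.
have i1 : -a <= a <= a by apply/andP; split; lra.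
have i2 : -a <= - a <= a by apply/andP; split; lra.
have i3 : -a <= 0 <= a by apply/andP; split; lra.
have i5 : -a <= 3 / 5 * a <= a by apply/andP; split; lra.
have [P1 E1] := Hp _ _ h1 i1.
have [P2 E2] := Hp _ _ h2 i2.
have [P3 E3] := Hp _ _ h3 i3.
have [P4 E4] := Hp _ _ h4 i3.
have [P5 E5] := Hp _ _ h5 i5.
have Hcu : cu = - L * au.
  have : a * (cu + L * au) = 0 by nra.
  by move/eqP; rewrite mulf_eq0 gt_eqF //= addr_eq0 mulNr => /eqP.
have Hcw : cw = - L * aw.
  have : b * (cw + L * aw) = 0 by nra.
  by move/eqP; rewrite mulf_eq0 gt_eqF //= addr_eq0 mulNr => /eqP.
have S1 : cc + a ^+ 2 = L ^+ 2 + a ^+ 2 * au ^+ 2 by nra.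
have S2 : cc + b ^+ 2 = L ^+ 2 + b ^+ 2 * aw ^+ 2 by nra.
have Hx : a * b * (au * aw) = 0 by nra.
have Hx' : au * aw = 0.
  have Hab : a * b != 0 by rewrite mulf_neq0 // gt_eqF.
  by move/eqP: Hx; rewrite mulf_eq0 (negbTE Hab) /= => /eqP.
have HL : 0 <= L by nra.
have Hcc' : cc = L ^+ 2 * (au ^+ 2 + aw ^+ 2) by rewrite Hcc Hcu Hcw; ring.
move/eqP: Hx'; rewrite mulf_eq0 => /orP [/eqP au0 | /eqP aw0].
-
  rewrite au0 in S1 S2 Hcc' *.
  have T1 : L ^+ 2 * (1 - aw ^+ 2) = a ^+ 2 by nra.
  have T2 : (L ^+ 2 - b ^+ 2) * (aw ^+ 2 - 1) = 0 by nra.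
  have Haw1 : 0 < 1 - aw ^+ 2.
    have Ha2 : 0 < a ^+ 2 by rewrite exprn_gt0.
    rewrite -T1 in Ha2; nra.
  have T3 : L ^+ 2 = b ^+ 2.
    move/eqP: T2; rewrite mulf_eq0 => /orP [/eqP|/eqP]; first lra.
    nra.
  have T4 : (1 - e2) * (1 - aw ^+ 2) = 1.
    have : a ^+ 2 * ((1 - e2) * (1 - aw ^+ 2) - 1) = 0 by nra.
    move/eqP; rewrite mulf_eq0 expf_eq0 /= gt_eqF //= subr_eq0 => /eqP //.
  have e20 : e2 = 0 by nra.
  have aw0 : aw = 0 by nra.
  have La : L = a by nra.
  split => //; [by rewrite aw0 e20; ring | by rewrite Hcu au0 mulr0].
- rewrite aw0 in S1 S2 Hcc' *.
  have T1 : L ^+ 2 * (1 - au ^+ 2) = b ^+ 2 by nra.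
  have Hau1 : 0 < 1 - au ^+ 2.
    have Hb2' : 0 < b ^+ 2 by rewrite exprn_gt0.
    rewrite -T1 in Hb2'; nra.
  have T2 : (L ^+ 2 - a ^+ 2) * (au ^+ 2 - 1) = 0 by nra.
  have T3 : L ^+ 2 = a ^+ 2.
    move/eqP: T2; rewrite mulf_eq0 => /orP [/eqP|/eqP]; first lra.
    nra.
  have La : L = a by nra.
  have T4 : au ^+ 2 = e2.
    have : a ^+ 2 * (au ^+ 2 - e2) = 0 by nra.
    move/eqP; rewrite mulf_eq0 expf_eq0 /= gt_eqF //= subr_eq0 => /eqP //.
  split => //; [by rewrite T4; ring | by rewrite Hcw aw0 mulr0].
Qed.


Section Geom.
Variable R : realType.
Implicit Types u v w x y : 'rV[R]_3.

Lemma enormE x : enorm x = Num.sqrt (dot x x). Proof. by []. Qed.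

Lemma frame (Z F1 F2 x0 : 'rV[R]_3) (a e : R) :
  dot Z Z = 1 -> 0 < a -> 0 <= e < 1 -> dot Z F1 = 0 -> dot Z F2 = 0 ->
  enorm (F1 - F2) = 2 * a * e ->
  dot Z x0 = 0 -> enorm (x0 - F1) + enorm (x0 - F2) = 2 * a ->
  exists u, [/\ dot u u = 1, dot Z u = 0,
     F1 = 2^-1 *: (F1 + F2) + (a * e) *: u & F2 = 2^-1 *: (F1 + F2) - (a * e) *: u].
Proof.
move=> HZ Ha /andP[He0 He1] HF1 HF2 HFF Hx0 Hx0S.
have [e0|epos] := eqVneq e 0.
- have HF : F1 = F2.
    apply/eqP; rewrite -subr_eq0; apply/eqP/dot_eq0.
    by rewrite -enorm_sq HFF e0 mulr0 expr0n.
  subst F2; rewrite e0 mulr0.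
  have Hn : enorm (x0 - F1) = a by lra.
  exists (a^-1 *: (x0 - F1)); split.
  + rewrite dotZl dotZr -enorm_sq Hn; field; by rewrite gt_eqF.
  + by rewrite dotZr dotBr Hx0 HF1 subrr mulr0.
  + apply: rv3P; rewrite !mxE; field; by rewrite gt_eqF.
  + apply: rv3P; rewrite !mxE; field; by rewrite gt_eqF.
- have Hae : 0 < a * e by rewrite mulr_gt0 // lt_neqAle eq_sym epos.
  have a0 : a != 0 by rewrite gt_eqF.
  exists ((2 * a * e)^-1 *: (F1 - F2)); split.
  + rewrite dotZl dotZr -enorm_sq HFF; field; by rewrite a0 epos.
  + by rewrite dotZr dotBr HF1 HF2 subrr mulr0.
  + apply: rv3P; rewrite !mxE; field; by rewrite a0 epos.
  + apply: rv3P; rewrite !mxE; field; by rewrite a0 epos.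
Qed.

Lemma geom (Z A0 F1 F2 x0 : 'rV[R]_3) (G0 a e : R) (S : set 'rV[R]_3) :
  dot Z Z = 1 -> dot Z A0 = 0 -> 0 < a -> 0 <= e < 1 ->
  dot Z F1 = 0 -> dot Z F2 = 0 -> enorm (F1 - F2) = 2 * a * e ->
  S = [set x | dot Z x = 0 /\ enorm (x - F1) + enorm (x - F2) = 2 * a] ->
  S x0 ->
  (forall x, S x -> 0 <= G0 - dot A0 x /\ dot x x = (G0 - dot A0 x) ^+ 2) ->
  G0 = a * (1 - e ^+ 2) /\ dot A0 A0 = e ^+ 2.
Proof.
move=> HZ HA Ha He HF1 HF2 HFF HS Sx0 Hrel.
have [Hx0Z Hx0S] : dot Z x0 = 0 /\ enorm (x0 - F1) + enorm (x0 - F2) = 2 * a.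
  by move: Sx0; rewrite HS.
have [u [Huu HZu E1 E2]] := frame HZ Ha He HF1 HF2 HFF Hx0Z Hx0S.
move: E1 E2; set c := 2^-1 *: (F1 + F2) => E1 E2.
set w := cross Z u.
have Hww : dot w w = 1 by rewrite dot_cross_cross HZ Huu HZu expr0n subr0 mulr1.
have Huw : dot u w = 0 by rewrite dot_cross_r.
have HZw : dot Z w = 0 by rewrite dot_cross_l.
have HZc : dot Z c = 0 by rewrite /c dotZr dotDr HF1 HF2 addr0 mulr0.
have compl : forall y1 y2, dot Z y1 = 0 -> dot Z y2 = 0 ->
    dot y1 y2 = dot y1 u * dot y2 u + dot y1 w * dot y2 w.
  move=> y1 y2 H1 H2; have G := gram_cross Z u y1 y2.
  rewrite HZ Huu HZu H2 in G.
  rewrite (dotC y1 w) (dotC y2 w) G (dotC y2 u); ring.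
case/andP: (He) => He0 He1.
have pt : forall al be, be ^+ 2 = (1 - e ^+ 2) * (a ^+ 2 - al ^+ 2) -> -a <= al <= a ->
    S (c + al *: u + be *: w).
  move=> al be Hb /andP [Hal1 Hal2]; rewrite HS; split.
    by rewrite dot_lin3r HZc HZu HZw !mulr0 !addr0.
  have D1 : c + al *: u + be *: w - F1 = (al - a * e) *: u + be *: w.
    rewrite [in LHS]E1; apply: rv3P; rewrite !mxE; ring.
  have D2 : c + al *: u + be *: w - F2 = (al + a * e) *: u + be *: w.
    rewrite [in LHS]E2; apply: rv3P; rewrite !mxE; ring.
  rewrite !enormE D1 D2 !dot_lin2' Huu Huw Hww Hb !mulr0 !addr0 !mulr1.
  have -> : (al - a * e) ^+ 2 + (1 - e ^+ 2) * (a ^+ 2 - al ^+ 2) = (a - e * al) ^+ 2 by ring.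
  have -> : (al + a * e) ^+ 2 + (1 - e ^+ 2) * (a ^+ 2 - al ^+ 2) = (a + e * al) ^+ 2 by ring.
  rewrite !sqrtr_sqr !ger0_norm; [ring | nra | nra].
set L := G0 - dot A0 c.
have Hcc : dot c c = dot c u ^+ 2 + dot c w ^+ 2 by rewrite (compl c c HZc HZc) !expr2.
have HAc : dot A0 c = dot A0 u * dot c u + dot A0 w * dot c w.
  by rewrite (compl A0 c HA HZc).
have HAA : dot A0 A0 = dot A0 u ^+ 2 + dot A0 w ^+ 2 by rewrite (compl A0 A0 HA HA) !expr2.
have Hb0 : 0 < 1 - e ^+ 2 by nra.
set b := a * Num.sqrt (1 - e ^+ 2).
have Hb : 0 < b by rewrite mulr_gt0 // sqrtr_gt0.
have Hb2 : b ^+ 2 = a ^+ 2 * (1 - e ^+ 2) by rewrite exprMn sqr_sqrtr // ltW.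
have He2 : 0 <= e ^+ 2 by rewrite sqr_ge0.
have He21 : e ^+ 2 < 1 by nra.
have Hp : forall al be, be ^+ 2 = (1 - e ^+ 2) * (a ^+ 2 - al ^+ 2) -> -a <= al <= a ->
     0 <= L - al * dot A0 u - be * dot A0 w /\
     dot c c + 2 * al * dot c u + 2 * be * dot c w + al ^+ 2 + be ^+ 2
       = (L - al * dot A0 u - be * dot A0 w) ^+ 2.
  move=> al be Hbe Hal.
  have [P E] := Hrel _ (pt al be Hbe Hal).
  rewrite dot_lin3 dot_lin3r Huu Huw Hww in E P.
  split.
    by move: P; rewrite /L; lra.
  rewrite /L; move: E; rewrite !mulr0 !mulr1 addr0 => ->; ring.
have [T1 T2 T3 T4] := @alg R a b (e ^+ 2) (dot c c) (dot c u) (dot c w) L (dot A0 u) (dot A0 w)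
   Ha Hb Hb2 He2 He21 Hcc Hp.
split; last by rewrite HAA T1.
have -> : G0 = L + dot A0 c by rewrite /L; ring.
rewrite HAc T3 T4 T2 -T1; ring.
Qed.
End Geom.


Lemma inv_fun (R : realType) (f : R -> R) (df : R -> R) :
  (forall t : R, is_derive t 1 f (df t)) -> (forall t, 0 < df t) ->
  exists g : R -> R, [/\ (forall t, g (f t) = t),
     (forall t : R, is_derive (f t) 1 g (df t)^-1) &
     (forall t0 : R, \forall u \near f t0, f (g u) = u)].
Proof.
move=> Hd Hpos.
have cont : forall t, {for t, continuous f}.
  move=> t; apply: differentiable_continuous; apply/derivable1_diffP.
  by case: (Hd t).
have incr : forall x y, x < y -> f x < f y.
  move=> x y xy; apply: (@gtr0_derive1_incr _ f x y).
  - by move=> z _; case: (Hd z).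
  - by move=> z _; rewrite derive1E (@derive_val _ _ _ _ _ _ _ (Hd z)); exact: Hpos.
  - by apply: continuous_subspaceT => z; exact: cont.
  - exact: lexx.
  - exact: xy.
  - exact: lexx.
have inj : injective f.
  move=> x y fxy; apply/eqP; apply/negP => /negP nxy.
  move: nxy; rewrite neq_lt => /orP [] /incr; rewrite fxy ltxx //.
pose g u := match pselect (exists y, f y = u) with
  | left H => sval (cid H) | right _ => 0 end.
have gK : forall t, g (f t) = t.
  move=> t; rewrite /g; case: pselect => [H|H]; last by exfalso; apply: H; exists t.
  by apply: inj; exact: (svalP (cid H)).
exists g; split => //.
- move=> t; apply: is_derive_inverse.
  + by apply: filterE => z; exact: gK.
  + by apply: filterE => z; exact: cont.
  + by rewrite gt_eqF.
- move=> t0.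
  have Hin : f t0 \in `](f (t0 - 1)), (f (t0 + 1))[.
    by rewrite in_itv /= !incr //; lra.
  have := near_in_itvoo Hin; apply: filterS => u.
  rewrite in_itv /= => /andP [H1 H2].
  have [c _ <-] : exists2 c, c \in `[t0 - 1, t0 + 1] & f c = u.
    apply: IVT; first lra.
      by apply: continuous_subspaceT => z; exact: cont.
    have H3 : f (t0 - 1) < f (t0 + 1) by apply: incr; lra.
    rewrite (min_idPl (ltW H3)) (max_idPr (ltW H3)).
    by rewrite !ltW.
  by rewrite gK.
Qed.


Section Main.
Variable R : realType.
Variables (Z : 'rV[R]_3) (Rd : R) (q : R -> 'rV[R]_3) (lam : R -> R).
Hypothesis HZ : dot Z Z = 1.
Hypothesis HR : 0 < Rd.
Hypothesis Hq : forall t, dot (q t) (q t) = Rd ^+ 2.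
Hypothesis Hh : forall t, 0 < hgt Rd Z (q t).
Hypothesis Hne : forall t, q t != Rd *: Z.
Hypothesis Hd1 : forall t, derivable q t 1.
Hypothesis Hd2 : forall t, derivable (derive1 q) t 1.
Hypothesis Hacc : forall t, derive1 (derive1 q) t
             = bfun Rd Z (q t) *: ZB Rd Z (q t) + lam t *: q t.

Let v t := derive1 q t.
Let s t := dot Z (q t).
Let sv t := dot Z (v t).
Let nv t := dot (v t) (v t).
Let b t := bfun Rd Z (q t).

Lemma Dq (t : R) : is_derive t 1 q (v t).
Proof. rewrite /v derive1E; exact: derivableP. Qed.

Lemma Dv (t : R) : is_derive t 1 v (b t *: ZB Rd Z (q t) + lam t *: q t).
Proof.
rewrite -Hacc derive1E.
have -> : v = derive1 q by apply/funext.
exact: derivableP.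
Qed.

Lemma Rd0 : Rd != 0. Proof. by rewrite gt_eqF. Qed.

Lemma hgtE t : hgt Rd Z (q t) = s t / Rd. Proof. by []. Qed.

Lemma spos t : 0 < s t.
Proof.
have := Hh t; rewrite hgtE => H.
have E : s t = (s t / Rd) * Rd by field; exact: Rd0.
rewrite E; exact: mulr_gt0.
Qed.

Lemma s_lt t : s t < Rd.
Proof.
have H1 : dot (q t - Rd *: Z) (q t - Rd *: Z) = 2 * Rd * (Rd - s t).
  rewrite !dotBl !dotBr !dotZl !dotZr Hq HZ (dotC (q t) Z) /s; ring.
have H2 : 0 < dot (q t - Rd *: Z) (q t - Rd *: Z).
  rewrite lt_neqAle dot_ge0 andbT eq_sym; apply/negP => /eqP /dot_eq0 /eqP.
  by rewrite subr_eq0 (negbTE (Hne t)).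
rewrite H1 in H2.
have H3 : 0 < 2 * Rd by rewrite mulr_gt0.
by move: H2; rewrite pmulr_rgt0 // subr_gt0.
Qed.

Lemma dZB y t : dot y (ZB Rd Z (q t)) = dot y Z - s t / Rd ^+ 2 * dot y (q t).
Proof. rewrite /ZB dotBr dotZr hgtE; congr (_ - _ * _); field; exact: Rd0. Qed.

Lemma Dcst (y : 'rV[R]_3) (t : R) : is_derive t 1 (fun _ : R => y) 0.
Proof. exact: is_derive_cst. Qed.

Lemma qv0 t : dot (q t) (v t) = 0.
Proof.
have H := Ddot (Dq t) (Dq t).
have E : (fun x => dot (q x) (q x)) = fun _ => Rd ^+ 2 by apply/funext => x; rewrite Hq.
rewrite E in H; have := der_uniq H (DK _ _).
rewrite (dotC (v t)) => H'; lra.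
Qed.

Lemma lamE t : lam t = - nv t / Rd ^+ 2.
Proof.
have H := Ddot (Dq t) (Dv t).
have E : (fun x => dot (q x) (v x)) = fun _ => 0 by apply/funext => x; rewrite qv0.
rewrite E in H; have := der_uniq H (DK _ _).
rewrite dotDr !dotZr dZB Hq (dotC (q t) Z) -/(s t) /nv => H'.
have E1 : s t - s t / Rd ^+ 2 * Rd ^+ 2 = 0 by field; exact: Rd0.
rewrite E1 mulr0 add0r in H'.
have -> : dot (v t) (v t) = - (lam t * Rd ^+ 2) by lra.
field; exact: Rd0.
Qed.

Lemma Ds (t : R) : is_derive t 1 s (sv t).
Proof.
apply: is_derive_eq; first exact: (Ddot (Dcst Z t) (Dq t)).
by rewrite dot0l addr0.
Qed.

Lemma Dsv (t : R) : is_derive t 1 sv (b t * (1 - s t ^+ 2 / Rd ^+ 2) + lam t * s t).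
Proof.
apply: is_derive_eq; first exact: (Ddot (Dcst Z t) (Dv t)).
rewrite dot0l addr0 dotDr !dotZr dZB HZ /s; ring.
Qed.

Lemma Dnv (t : R) : is_derive t 1 nv (2 * b t * sv t).
Proof.
apply: is_derive_eq; first exact: (Ddot (Dv t) (Dv t)).
rewrite (dotC _ (v t)) dotDr !dotZr dZB (dotC (v t) (q t)) qv0 (dotC (v t) Z) /sv; ring.
Qed.

Lemma Dqy (y : 'rV[R]_3) (t : R) : is_derive t 1 (fun x => dot y (q x)) (dot y (v t)).
Proof.
apply: is_derive_eq; first exact: (Ddot (Dcst y t) (Dq t)).
by rewrite dot0l addr0.
Qed.

Lemma Dvy (y : 'rV[R]_3) (t : R) : is_derive t 1 (fun x => dot y (v x))
   (b t * (dot y Z - s t / Rd ^+ 2 * dot y (q t)) + lam t * dot y (q t)).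
Proof.
apply: is_derive_eq; first exact: (Ddot (Dcst y t) (Dv t)).
by rewrite dot0l addr0 dotDr !dotZr dZB.
Qed.

Let rr t := Num.sqrt (1 - hgt Rd Z (q t) ^+ 2).
Let rho t := s t / (Rd ^+ 2 * rr t).

Lemma h_pos t : 0 < 1 - hgt Rd Z (q t) ^+ 2.
Proof.
rewrite hgtE; have H1 := spos t; have H2 := s_lt t.
have H3 : s t / Rd < 1 by rewrite ltr_pdivrMr // mul1r.
have H4 : 0 < s t / Rd by rewrite divr_gt0.
nra.
Qed.

Lemma rr_pos t : 0 < rr t.
Proof. by rewrite sqrtr_gt0 h_pos. Qed.

Lemma rr2 t : rr t ^+ 2 = 1 - (s t / Rd) ^+ 2.
Proof. by rewrite sqr_sqrtr // ltW // h_pos. Qed.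

Lemma rr0 t : rr t != 0. Proof. by rewrite gt_eqF // rr_pos. Qed.
Lemma s0 t : s t != 0. Proof. by rewrite gt_eqF // spos. Qed.

Lemma bE' t : b t = (Rd ^+ 2 * rr t ^+ 3)^-1.
Proof. by []. Qed.

Lemma RsE t : Rd ^+ 2 - s t ^+ 2 = Rd ^+ 2 * rr t ^+ 2.
Proof. rewrite rr2; field; exact: Rd0. Qed.

Lemma Rs0 t : Rd ^+ 2 - s t ^+ 2 != 0.
Proof. by rewrite RsE mulf_neq0 // expf_neq0 // ?Rd0 ?rr0. Qed.

Lemma bE t : b t = rho t * Rd ^+ 2 / (s t * (Rd ^+ 2 - s t ^+ 2)).
Proof.
rewrite bE' RsE /rho; field.
by rewrite (rr0 t) (s0 t) Rd0.
Qed.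

Lemma Dh (t : R) : is_derive t 1 (fun x => hgt Rd Z (q x)) (sv t / Rd).
Proof.
change (is_derive t 1 (fun x => s x * Rd^-1) (sv t / Rd)).
apply: is_derive_eq; first exact: (DM (Ds t) (DK Rd^-1 t)).
rewrite /s; ring.
Qed.

Lemma Drr (t : R) : is_derive t 1 rr
  (- (2 * hgt Rd Z (q t) * (sv t / Rd)) / (2 * rr t)).
Proof.
have H := @DS R (fun x => 1 - hgt Rd Z (q x) ^+ 2) t _ (h_pos t) (DB (DK 1 t) (DX2 (Dh t))).
rewrite /rr; apply: (is_derive_eq H).
by rewrite sub0r.
Qed.

Lemma Drho (t : R) : is_derive t 1 rho (b t * sv t).
Proof.
have Hn : Rd ^+ 2 * rr t != 0 by rewrite mulf_neq0 // ?expf_neq0 ?Rd0 ?rr0.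
have H := DM (Ds t) (@DV R (fun x => Rd ^+ 2 * rr x) t _ Hn (DM (DK (Rd ^+ 2) t) (Drr t))).
change (is_derive t 1 (fun x => s x * (Rd ^+ 2 * rr x)^-1) (b t * sv t)).
apply: (is_derive_eq H).
rewrite bE'.
transitivity (sv t / Rd * (rr t ^+ 2 + (s t / Rd) ^+ 2) / (Rd * rr t ^+ 3)).
  rewrite hgtE; field; by rewrite (rr0 t) Rd0.
rewrite rr2; field; by rewrite (rr0 t) Rd0.
Qed.

Let X t := (s t ^+ 2 * nv t + sv t ^+ 2 * Rd ^+ 2) / Rd ^+ 2.
Let Qy y t := Rd / s t * dot y (q t) - Rd * dot y Z.
Let QV t := - (Rd ^+ 2 * sv t) / s t.
Let Vy y t := (s t * dot y (v t) - sv t * dot y (q t)) / Rd.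
Let Ay y t := (X t - rho t) * Qy y t - QV t * Vy y t.
Let Gs t := (Rd ^+ 2 - s t ^+ 2) * nv t - Rd ^+ 2 * sv t ^+ 2.

Ltac dchain := repeat first [ apply: DK | apply: Ds | apply: Dsv | apply: Dnv
  | apply: Dqy | apply: Dvy | apply: Drho | apply: DX2 | apply: DA | apply: DB
  | apply: DN | apply: DM | apply: DV ].

Lemma DAy (y : 'rV[R]_3) (t : R) : is_derive t 1 (Ay y) 0.
Proof.
rewrite /Ay /X /Qy /QV /Vy.
apply: is_derive_eq.
  dchain.
  all: try exact: s0.
  all: try exact: Rd0.
rewrite /= bE lamE.
field.
by rewrite (s0 t) (Rs0 t) Rd0.
Qed.

Lemma DGs (t : R) : is_derive t 1 Gs 0.
Proof.
rewrite /Gs; apply: is_derive_eq.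
  dchain.
rewrite /= lamE; field; exact: Rd0.
Qed.

Let Qv t := Qproj Rd Z (q t).
Let Vv t := Rd^-1 *: (s t *: v t - sv t *: q t).
Let Av t := (X t - rho t) *: Qv t - QV t *: Vv t.

Lemma hinvE t : (hgt Rd Z (q t))^-1 = Rd / s t.
Proof. rewrite hgtE invf_div //. Qed.

Lemma dQy y t : dot y (Qv t) = Qy y t.
Proof. by rewrite /Qv /Qproj dotBr !dotZr hinvE. Qed.

Lemma dVy y t : dot y (Vv t) = Vy y t.
Proof. rewrite /Vv /Vy dotZr dotBr !dotZr; field; exact: Rd0. Qed.

Lemma dAy y t : dot y (Av t) = Ay y t.
Proof. by rewrite /Av dotBr (dotZr y (Qv t)) (dotZr y (Vv t)) dQy dVy. Qed.

Lemma Ay_cst y t : Ay y t = Ay y 0.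
Proof. apply: is_derive_0_is_cst => x; exact: DAy. Qed.

Lemma Gs_cst t : Gs t = Gs 0.
Proof. apply: is_derive_0_is_cst => x; exact: DGs. Qed.

Lemma Av_cst t : Av t = Av 0.
Proof.
apply/eqP; rewrite -subr_eq0; apply/eqP/dot_eq0.
by rewrite dotBr !dAy [Ay _ t]Ay_cst subrr.
Qed.

Lemma ZQ t : dot Z (Qv t) = 0.
Proof. rewrite dQy /Qy HZ /s /=; field; exact: s0. Qed.
Lemma ZV t : dot Z (Vv t) = 0.
Proof. rewrite dVy /Vy /sv /s /=; field; exact: Rd0. Qed.
Lemma ZA t : dot Z (Av t) = 0.
Proof. by rewrite /Av dotBr (dotZr Z (Qv t)) (dotZr Z (Vv t)) ZQ ZV !mulr0 subrr. Qed.

Lemma QQ t : dot (Qv t) (Qv t) = Rd ^+ 2 * (Rd ^+ 2 - s t ^+ 2) / s t ^+ 2.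
Proof.
rewrite /Qv /Qproj !dotBl !dotBr !dotZl !dotZr Hq HZ hinvE (dotC (q t) Z).
rewrite -/(s t); field; exact: s0.
Qed.

Lemma VV t : dot (Vv t) (Vv t) = X t.
Proof.
rewrite /Vv /X !dotZl !dotZr !dotBl !dotBr !dotZl !dotZr Hq (dotC (v t) (q t)) qv0 /nv /=.
field; exact: Rd0. Qed.

Lemma QVE t : dot (Qv t) (Vv t) = QV t.
Proof.
rewrite /Vv /Qv /Qproj /QV !dotZr !dotBl !dotBr !dotZl !dotZr Hq qv0 hinvE.
rewrite /sv /s /=; field; by rewrite (s0 t) Rd0.
Qed.

Lemma rhoQ t : rho t ^+ 2 * dot (Qv t) (Qv t) = 1.
Proof.
rewrite QQ RsE /rho; field; by rewrite (s0 t) (rr0 t) Rd0.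
Qed.

Lemma rho_pos t : 0 < rho t.
Proof. by rewrite /rho divr_gt0 ?spos // mulr_gt0 ?exprn_gt0 ?rr_pos. Qed.

Lemma GsE t : Gs t = dot (Qv t) (Qv t) * X t - QV t ^+ 2.
Proof.
rewrite QQ /Gs /X /QV /nv; field; by rewrite (s0 t) Rd0.
Qed.

Lemma AQ t : dot (Av t) (Qv t) = Gs t - rho t * dot (Qv t) (Qv t).
Proof.
rewrite /Av dot_linl (dotC (Vv t)) QVE GsE; ring.
Qed.

Lemma AA t : dot (Av t) (Av t) = 1 + (X t - 2 * rho t) * Gs t.
Proof.
rewrite /Av dot_lin2 QVE VV GsE.
have H := rhoQ t.
transitivity (rho t ^+ 2 * dot (Qv t) (Qv t) + (X t - 2 * rho t) * (dot (Qv t) (Qv t) * X t - QV t ^+ 2)).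
  ring.
by rewrite H.
Qed.

Lemma energyE t : energy Rd Z (q t) (v t) = (X t - 2 * rho t) / 2 + Gs t / (2 * Rd ^+ 2).
Proof.
rewrite /energy /Upot /Gs /X /rho -/(rr t) hgtE -/(nv t).
field; by rewrite (rr0 t) Rd0.
Qed.

Lemma energy_part a e : is_ellipse_in_plane Z (range (fun t => Qproj Rd Z (q t))) a e ->
  forall t, energy Rd Z (q t) (derive1 q t) = - (2 * a)^-1 + a * (1 - e ^+ 2) / (2 * Rd ^+ 2).
Proof.
move=> [Ha [He [F1 [F2 [HF1 [HF2 [HFF HS]]]]]]] t.
have Hrel : forall x, range Qv x ->
    0 <= Gs 0 - dot (Av 0) x /\ dot x x = (Gs 0 - dot (Av 0) x) ^+ 2.
  move=> x [t' _ <-]; rewrite -(Av_cst t') -(Gs_cst t') AQ.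
  have -> : Gs t' - (Gs t' - rho t' * dot (Qv t') (Qv t')) = rho t' * dot (Qv t') (Qv t') by ring.
  split; first by rewrite mulr_ge0 ?dot_ge0 // ltW // rho_pos.
  rewrite exprMn.
  transitivity ((rho t' ^+ 2 * dot (Qv t') (Qv t')) * dot (Qv t') (Qv t')); last by ring.
  by rewrite rhoQ mul1r.
have Sx0 : range Qv (Qv 0) by exists 0.
have [G0E AAE] := geom HZ (ZA 0) Ha He HF1 HF2 HFF HS Sx0 Hrel.
have HA := AA t; rewrite (Av_cst t) AAE (Gs_cst t) G0E in HA.
case/andP: He => He0 He1.
have Hne1 : 1 - e ^+ 2 != 0 by rewrite subr_eq0 eq_sym; apply/negP => /eqP H1; nra.
have HK : X t - 2 * rho t = - a^-1.
  have : (1 - e ^+ 2) * ((X t - 2 * rho t) * a + 1) = 0.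
    transitivity (1 + (X t - 2 * rho t) * (a * (1 - e ^+ 2)) - e ^+ 2); [ring | by rewrite -HA subrr].
  move/eqP; rewrite mulf_eq0 (negbTE Hne1) /= addr_eq0 => /eqP H1.
  apply: (@mulIf _ a); first by rewrite gt_eqF.
  by rewrite H1 mulNr mulVf // gt_eqF.
have Hen := energyE t.
rewrite /v in Hen; rewrite Hen HK (Gs_cst t) G0E; field.
by rewrite Rd0 gt_eqF.
Qed.

Lemma Dqj j (t : R) : is_derive t 1 (fun x => q x 0 j) (v t 0 j).
Proof. exact: Dcomp_rv (Dq t). Qed.

Lemma Dvj j (t : R) : is_derive t 1 (fun x => v x 0 j)
  (b t * (Z 0 j - s t / Rd ^+ 2 * q t 0 j) + lam t * q t 0 j).
Proof.
apply: is_derive_eq; first exact: (Dcomp_rv j (Dv t)).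
rewrite !mxE hgtE; congr (_ * (_ - _ * _) + _); field; exact: Rd0.
Qed.

Let Qj j t := Rd / s t * q t 0 j - Rd * Z 0 j.
Let Vj j t := (s t * v t 0 j - sv t * q t 0 j) / Rd.

Lemma QvE j t : Qv t 0 j = Qj j t.
Proof. by rewrite /Qv /Qproj !mxE hinvE. Qed.

Lemma VvE j t : Vv t 0 j = Vj j t.
Proof. by rewrite /Vv /Vj !mxE mulrC. Qed.

Ltac dchain2 := repeat first [ apply: DK | apply: Ds | apply: Dsv | apply: Dqj | apply: Dvj
  | apply: DX2 | apply: DA | apply: DB | apply: DN | apply: DM | apply: DV ].

Lemma DQj j (t : R) : is_derive t 1 (Qj j) (Rd ^+ 2 / s t ^+ 2 * Vj j t).
Proof.
rewrite /Qj; apply: is_derive_eq.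
  dchain2.
  all: try exact: s0.
rewrite /Vj /=; field; by rewrite (s0 t) Rd0.
Qed.

Lemma DVj j (t : R) : is_derive t 1 (Vj j) (b t * (s t * Z 0 j - q t 0 j) / Rd).
Proof.
rewrite /Vj; apply: is_derive_eq.
  dchain2.
  all: try exact: Rd0.
rewrite /=; field; exact: Rd0.
Qed.

Lemma enormQ t : enorm (Qv t) = (rho t)^-1.
Proof.
have H := rhoQ t.
rewrite /enorm; have -> : dot (Qv t) (Qv t) = (rho t)^-1 ^+ 2.
  have r0 : rho t != 0 by rewrite gt_eqF // rho_pos.
  apply: (@mulfI _ (rho t ^+ 2)); first by rewrite expf_neq0.
  by rewrite H; field.
by rewrite sqrtr_sqr ger0_norm // ltW // invr_gt0 rho_pos.
Qed.

Lemma kepler_part (tau : R -> R) (P : R -> 'rV[R]_3) :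
  (forall t, derivable tau t 1 /\ derive1 tau t = (hgt Rd Z (q t) ^+ 2)^-1) ->
  (forall t, P (tau t) = Qproj Rd Z (q t)) ->
  forall t, derivable P (tau t) 1 /\ derivable (derive1 P) (tau t) 1 /\
    derive1 (derive1 P) (tau t) = - (enorm (P (tau t)) ^+ 3)^-1 *: P (tau t).
Proof.
move=> Htau HP t0.
have Dtau : forall t : R, is_derive t 1 tau ((hgt Rd Z (q t) ^+ 2)^-1).
  move=> t; case: (Htau t) => H1 H2; rewrite -H2 derive1E; exact: derivableP.
have Hpos : forall t, 0 < (hgt Rd Z (q t) ^+ 2)^-1.
  by move=> t; rewrite invr_gt0 exprn_gt0.
have [g [gK Dg Hnear]] := inv_fun Dtau Hpos.
have PQ : forall t, \forall u \near tau t, Qv (g u) = P u.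
  by move=> t; apply: filterS (Hnear t) => u Hu; rewrite -{2}Hu HP.
have DP : forall t, is_derive (tau t) 1 P (Vv t).
  move=> t; apply: (near_eq_is_derive (PQ t)).
  apply: Drv => j.
  have -> : (fun u => Qv (g u) 0 j) = (Qj j) \o g by apply/funext => u; rewrite /= QvE.
  apply: is_derive_eq.
    apply: is_derive1_comp; rewrite gK; exact: DQj.
  rewrite VvE invrK hgtE; field; by rewrite (s0 t) Rd0.
have dPE : \forall u \near tau t0, Vv (g u) = derive1 P u.
  apply: filterS (Hnear t0) => u Hu.
  by rewrite -{2}Hu derive1E (@derive_val _ _ _ _ _ _ _ (DP (g u))).
have DdP : is_derive (tau t0) 1 (derive1 P)
    (- (enorm (P (tau t0)) ^+ 3)^-1 *: P (tau t0)).
  apply: (near_eq_is_derive dPE).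
  apply: Drv => j.
  have -> : (fun u => Vv (g u) 0 j) = (Vj j) \o g by apply/funext => u; rewrite /= VvE.
  apply: is_derive_eq.
    apply: is_derive1_comp; rewrite gK; exact: DVj.
  rewrite HP -/(Qv t0) enormQ !mxE hinvE invrK hgtE bE' /rho.
  field; by rewrite (s0 t0) (rr0 t0) Rd0.
split; first by case: (DP t0).
split; first by case: DdP.
by rewrite derive1E (@derive_val _ _ _ _ _ _ _ DdP).
Qed.
End Main.

Unset Implicit Arguments.

Theorem mainTheorem1 (R : realType) (Z : 'rV[R]_3) (Rad : R)
  (q : R -> 'rV[R]_3) (lam : R -> R) (a e : R) :
  dot Z Z = 1 ->
  0 < Rad ->
  (* q moves on the sphere B, in the open hemisphere h > 0, avoiding O = RZ *)
  (forall t, dot (q t) (q t) = Rad ^+ 2) ->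
  (forall t, 0 < hgt Rad Z (q t)) ->
  (forall t, q t != Rad *: Z) ->
  (* spherical Kepler problem: qddot = b(q) Z_B + lambda q *)
  (forall t, derivable q t 1) ->
  (forall t, derivable (derive1 q) t 1) ->
  (forall t, derive1 (derive1 q) t
             = bfun Rad Z (q t) *: ZB Rad Z (q t) + lam t *: q t) ->
  (* the orbit of Q = q/h - RZ is an ellipse with semi-major axis a and
     eccentricity e *)
  is_ellipse_in_plane Z (range (fun t => Qproj Rad Z (q t))) a e ->
  (* Q, reparametrized by tau with dtau = h^{-2} dt, solves Kepler's equation *)
  (forall (tau : R -> R) (P : R -> 'rV[R]_3),
     (forall t, derivable tau t 1 /\ derive1 tau t = (hgt Rad Z (q t) ^+ 2)^-1) ->
     (forall t, P (tau t) = Qproj Rad Z (q t)) ->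
     forall t, derivable P (tau t) 1 /\ derivable (derive1 P) (tau t) 1 /\
       derive1 (derive1 P) (tau t) = - (enorm (P (tau t)) ^+ 3)^-1 *: P (tau t))
  /\
  (* energy formula *)
  (forall t, energy Rad Z (q t) (derive1 q t)
             = - (2 * a)^-1 + a * (1 - e ^+ 2) / (2 * Rad ^+ 2)).
Proof.
move=> HZ HR Hq Hh Hne Hd1 Hd2 Hacc Hell.
split.
- by apply: kepler_part.
- by apply: energy_part.
Qed.
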